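(* Let $\rho\ge 0$ and let $t=(\sqrt{1+8\rho}-1)/(2\rho)$ if $\rho>0$ and $t=2$ if $\rho=0$. Consider the two-dimensional Poisson regression model with interaction at $\boldsymbol{\beta}=(0,-1,-1,-\rho)^\top$ on $\mathcal{X}=[0,\infty)^2$, and let $\xi_t$ be the design assigning equal weights $1/4$ to $(0,0)$, $(2,0)$, $(0,2)$ and $(t,t)$. Then $d((x,0);\xi_t)=d((0,x);\xi_t)\le 0$ for all $x\ge 0$.
   Context: In the model, an observation at setting $\mathbf{x}=(x_1,x_2)$ is Poisson distributed with mean $\lambda(\mathbf{x})=\exp(\mathbf{f}(\mathbf{x})^\top\boldsymbol{\beta})=\exp(-x_1-x_2-\rho x_1x_2)$, where $\mathbf{f}(\mathbf{x})=(1,x_1,x_2,x_1x_2)^\top$. For a design $\xi$ with settings $\mathbf{x}_i$ and weights $w_i$ (nonnegative, summing to $1$), the information matrix is $\mathbf{M}(\xi)=\sum_i w_i\lambda(\mathbf{x}_i)\mathbf{f}(\mathbf{x}_i)\mathbf{f}(\mathbf{x}_i)^\top$, and the deduced sensitivity function is $d(\mathbf{x};\xi)=\mathbf{f}(\mathbf{x})^\top\mathbf{M}(\xi)^{-1}\mathbf{f}(\mathbf{x})/p-1/\lambda(\mathbf{x})$ with $p=4$. *)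

(* Defs.v *)
From HB Require Import structures.
From mathcomp Require Import all_boot all_order all_algebra.
From mathcomp Require Import reals sequences exp.
Set Implicit Arguments. Unset Strict Implicit. Unset Printing Implicit Defensive.
Import Order.TTheory GRing.Theory Num.Theory.
Local Open Scope ring_scope.

Section PoissonDesign.
Variable R : realType.

Definition fvec (x : R * R) : 'cV[R]_4 :=
  \col_(i < 4) nth 0 [:: 1; x.1; x.2; x.1 * x.2] i.

Definition beta (rho : R) : 'cV[R]_4 :=
  \col_(i < 4) nth 0 [:: 0; -1; -1; - rho] i.

Definition lam (rho : R) (x : R * R) : R :=
  expR (((fvec x)^T *m beta rho) 0 0).

Definition design := seq ((R * R) * R).

Definition is_design (xi : design) : Prop :=
  (forall p, p \in xi -> 0 <= p.2) /\ \sum_(p <- xi) p.2 = 1.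

Definition infoM (rho : R) (xi : design) : 'M[R]_4 :=
  \sum_(p <- xi) (p.2 * lam rho p.1) *: (fvec p.1 *m (fvec p.1)^T).

(* deduced sensitivity function, p = 4 *)
Definition sens (rho : R) (xi : design) (x : R * R) : R :=
  ((fvec x)^T *m invmx (infoM rho xi) *m fvec x) 0 0 / 4%:R - (lam rho x)^-1.

Definition t_of (rho : R) : R :=
  if 0 < rho then (Num.sqrt (1 + 8%:R * rho) - 1) / (2%:R * rho) else 2%:R.

Definition xi_t (t : R) : design :=
  [:: ((0, 0), 4%:R^-1); ((2%:R, 0), 4%:R^-1); ((0, 2%:R), 4%:R^-1);
      ((t, t), 4%:R^-1)].

End PoissonDesign.

(* Main.v *)
Require Import Defs.
From HB Require Import structures.
From mathcomp Require Import all_boot all_order all_algebra.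
From mathcomp Require Import reals sequences exp.
From mathcomp Require Import ring lra.
Import Order.TTheory GRing.Theory Num.Theory.
Local Open Scope ring_scope.
Section S.
Variable R : realType.

Lemma exp_low3 (u : R) : 0 <= u -> (1 + u / 3%:R) ^+ 3 <= expR u.
Proof.
move=> u0.
have -> : u = 3%:R * (u / 3%:R) by field.
rewrite expRM_natl; apply: lerXn2r.
- rewrite nnegrE; lra.
- by rewrite nnegrE expR_ge0.
- have -> : 3%:R * (u / 3%:R) / 3%:R = u / 3%:R by field.
  exact: expR_ge1Dx.
Qed.

Lemma exp_low4 (u : R) : 0 <= u <= 4%:R -> (1 - u / 4%:R) ^+ 4 <= expR (- u).
Proof.
move=> /andP[u0 u4].
have -> : - u = 4%:R * (- (u / 4%:R)) by field.
rewrite expRM_natl; apply: lerXn2r.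
- rewrite nnegrE; lra.
- by rewrite nnegrE expR_ge0.
- exact: expR_ge1Dx.
Qed.

Lemma key (x : R) : 0 <= x ->
  (1 - x / 2%:R) ^+ 2 + (x / 2%:R) ^+ 2 * expR 2%:R <= expR x.
Proof.
move=> x0.
have e1 : expR 1 * expR (- 1) = 1 :> R by rewrite expRxMexpNx_1.
have elo := @exp_low3 1 ler01.
have ehi : (1 - 1 / 4%:R) ^+ 4 <= expR (- 1) :> R.
  by apply: exp_low4; apply/andP; split; lra.
have Q : expR 2%:R = expR 1 * expR 1 :> R by rewrite -expRD.
have ep := expR_gt0 (1 : R).
have en := expR_gt0 (- 1 : R).
have Qlo : 5%:R <= expR 2%:R :> R.
  rewrite Q; move: elo; rewrite !exprS expr0 !mulr1 => elo. nra.
have Qhi : expR 2%:R <= 10%:R :> R.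
  rewrite Q; move: ehi; rewrite !exprS expr0 !mulr1 => ehi. nra.
set q := expR 2%:R in Qlo Qhi *.
case: (lerP 2%:R x) => x2.
  have -> : x = 2%:R + (x - 2%:R) by ring.
  rewrite expRD.
  have h := @exp_low3 (x - 2%:R) ltac:(lra); move: h; rewrite !exprS expr0 !mulr1 => h.
  set y := x - 2%:R in h *.
  have y0 : 0 <= y by rewrite /y; lra.
  have q0 : 0 <= q by lra.
  have h1 := ler_wpM2l q0 h.
  have h2 : 0 <= y * y * (q - 3%:R) by apply: mulr_ge0; [apply: mulr_ge0|lra].
  have h3 : 0 <= q * (y * y * y) by apply: mulr_ge0 => //; apply: mulr_ge0 => //; apply: mulr_ge0.
  apply: le_trans h1; rewrite ?exprS ?expr0 ?mulr1. nra.
case: (lerP x (4%:R / 5%:R)) => x8.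
  have := @exp_low3 x x0; rewrite !exprS expr0 !mulr1 => h.
 
  apply: le_trans h; rewrite ?exprS ?expr0 ?mulr1.
  have h2 : 0 <= x * x * (10%:R - q) by apply: mulr_ge0; [apply: mulr_ge0|lra].
  have h3 : 0 <= x * (x * x) by apply: mulr_ge0 => //; apply: mulr_ge0.
  have h4 : 0 <= x * (x * (4%:R / 5%:R - x)) by apply: mulr_ge0 => //; apply: mulr_ge0 => //; lra.
  nra.
have -> : x = 2%:R + - (2%:R - x) by ring.
rewrite expRD.
have h := @exp_low4 (2%:R - x) ltac:(apply/andP; split; lra).
move: h; rewrite !exprS expr0 !mulr1 => h.
set z := 2%:R - x in h *.
have -> : 2%:R + - z = x by rewrite /z; ring.
have z0 : 0 <= z by rewrite /z; lra.
have z1 : z <= 6%:R / 5%:R by rewrite /z; lra.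
have q0 : 0 <= q by lra.
have h1 := ler_wpM2l q0 h.
apply: le_trans h1; rewrite ?exprS ?expr0 ?mulr1.
have -> : x = 2%:R - z by rewrite /z; ring.
have h2 : 0 <= z * z * (q - 5%:R) by apply: mulr_ge0; [apply: mulr_ge0|lra].
have h3 : 0 <= q * (z * z * z * z) by apply: mulr_ge0 => //; do 3 apply: mulr_ge0 => //.
have h4 : 0 <= z * z * (q * (6%:R / 5%:R - z)) by apply: mulr_ge0; [apply: mulr_ge0|apply: mulr_ge0 => //; lra].
nra.
Qed.

Definition cv4 (a b c d : R) : 'cV[R]_4 := \col_(i < 4) nth 0 [:: a; b; c; d] i.

Lemma dot4 (a b c d a' b' c' d' : R) :
  ((cv4 a b c d)^T *m cv4 a' b' c' d') 0 0 = a * a' + b * b' + c * c' + d * d'.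
Proof.
rewrite mxE !big_ord_recl big_ord0 !mxE /=. ring.
Qed.

Lemma fvecE (x : R * R) : fvec x = cv4 1 x.1 x.2 (x.1 * x.2).
Proof. by []. Qed.

Lemma lamE rho (a b : R) : lam rho (a, b) = expR (- a - b - rho * a * b).
Proof. rewrite /lam fvecE /beta -/(cv4 _ _ _ _) dot4 /=. congr expR. ring. Qed.

Lemma cv4Z k (a b c d : R) : k *: cv4 a b c d = cv4 (k*a) (k*b) (k*c) (k*d).
Proof. by apply/colP => i; rewrite !mxE; case: i => [[|[|[|[|i]]]] Hi]. Qed.
Lemma cv4D (a b c d a' b' c' d' : R) :
  cv4 a b c d + cv4 a' b' c' d' = cv4 (a+a') (b+b') (c+c') (d+d').
Proof. by apply/colP => i; rewrite !mxE; case: i => [[|[|[|[|i]]]] Hi] //=; rewrite addr0. Qed.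

Lemma infoM_mul rho xi (v : 'cV[R]_4) : infoM rho xi *m v =
  \sum_(p <- xi) ((p.2 * lam rho p.1) * ((fvec p.1)^T *m v) 0 0) *: fvec p.1.
Proof.
rewrite /infoM mulmx_suml; apply: eq_bigr => p _.
by rewrite -scalemxAl -mulmxA {1}[(_^T *m v)]mx11_scalar mul_mx_scalar scalerA.
Qed.

Lemma infoM_lmul rho xi (u : 'rV[R]_4) : u *m infoM rho xi =
  \sum_(p <- xi) ((p.2 * lam rho p.1) * (u *m fvec p.1) 0 0) *: (fvec p.1)^T.
Proof.
rewrite /infoM mulmx_sumr; apply: eq_bigr => p _.
by rewrite -scalemxAr mulmxA {1}[(u *m _)]mx11_scalar mul_scalar_mx scalerA.
Qed.

Lemma unit_M (rho t : R) : t != 0 -> infoM rho (xi_t t) \in unitmx.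
Proof.
move=> t0.
rewrite unitmxE unitfE. apply/negP => /det0P [u un0 uM].
have := congr1 (fun A => (A *m u^T) 0 0) uM.
rewrite mul0mx infoM_lmul /xi_t !big_cons big_nil addr0 /=.
rewrite !mulmxDl !mxE !big_ord_recl !big_ord0 !mxE /= !lamE.
set u0 := u 0 ord0. set u1 := u 0 (lift ord0 ord0).
set u2 := u 0 (lift ord0 (lift ord0 ord0)).
set u3 := u 0 (lift ord0 (lift ord0 (lift ord0 ord0))).
set e1 := expR (- 0 - 0 - rho * 0 * 0).
set e2 := expR (-2 - 0 - rho * 2 * 0).
set e3 := expR (- 0 - 2 - rho * 0 * 2).
set e4 := expR (- t - t - rho * t * t).
move=> H.
pose s1 := u0. pose s2 := u0 + 2 * u1. pose s3 := u0 + 2 * u2.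
pose s4 := u0 + t * u1 + t * u2 + t * t * u3.
have Esum : e1 * (s1 * s1) + e2 * (s2 * s2) + e3 * (s3 * s3) + e4 * (s4 * s4) = 0.
  rewrite -[RHS](mulr0 4) -H /s1 /s2 /s3 /s4; field; rewrite ?pnatr_eq0 //.
have nn : forall e s : R, 0 < e -> 0 <= e * (s * s).
  by move=> e s ep; apply: mulr_ge0; [exact: ltW | rewrite -expr2; exact: sqr_ge0].
have z : forall e s : R, 0 < e -> e * (s * s) = 0 -> s = 0.
  move=> e s ep /eqP; rewrite mulf_eq0 (gt_eqF ep) /= mulf_eq0 orbb => /eqP //.
have h1 := nn e1 s1 (expR_gt0 _). have h2 := nn e2 s2 (expR_gt0 _).
have h3 := nn e3 s3 (expR_gt0 _). have h4 := nn e4 s4 (expR_gt0 _).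
have L4 : forall a b c d : R, 0 <= a -> 0 <= b -> 0 <= c -> 0 <= d ->
  a + b + c + d = 0 -> [/\ a = 0, b = 0, c = 0 & d = 0].
  move=> a b c d ? ? ? ? ?; split; lra.
have [A1 A2 A3 A4] := L4 _ _ _ _ h1 h2 h3 h4 Esum.
have S1 : s1 = 0 by apply: (z e1) => //; exact: expR_gt0.
have S2 : s2 = 0 by apply: (z e2) => //; exact: expR_gt0.
have S3 : s3 = 0 by apply: (z e3) => //; exact: expR_gt0.
have S4 : s4 = 0 by apply: (z e4) => //; exact: expR_gt0.
have U0 : u0 = 0 by [].
have U1 : u1 = 0 by move: S2; rewrite /s2 U0; lra.
have U2 : u2 = 0 by move: S3; rewrite /s3 U0; lra.
have U3 : u3 = 0.
  move: S4; rewrite /s4 U0 U1 U2 !mulr0 !add0r => /eqP.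
  by rewrite !mulf_eq0 (negPf t0) /= => /eqP.
move/eqP: un0; apply; apply/rowP => j; rewrite !mxE.
case: j => [[|[|[|[|k]]]] Hk] //.
- by rewrite -U0 /u0; congr (u 0 _); apply: val_inj.
- by rewrite -U1 /u1; congr (u 0 _); apply: val_inj.
- by rewrite -U2 /u2; congr (u 0 _); apply: val_inj.
- by rewrite -U3 /u3; congr (u 0 _); apply: val_inj.
Qed.

Lemma sens_sol (rho : R) xi x v : infoM rho xi \in unitmx -> infoM rho xi *m v = fvec x ->
  sens rho xi x = ((fvec x)^T *m v) 0 0 / 4%:R - (lam rho x)^-1.
Proof. by move=> U H; rewrite /sens -mulmxA -H mulKmx. Qed.

Lemma lam00 rho : lam rho (0, 0) = 1 :> R.
Proof. by rewrite lamE -expR0; congr expR; ring. Qed.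
Lemma lam20 rho : lam rho (2%:R, 0) = expR (- 2%:R) :> R.
Proof. by rewrite lamE; congr expR; ring. Qed.
Lemma lam02 rho : lam rho (0, 2%:R) = expR (- 2%:R) :> R.
Proof. by rewrite lamE; congr expR; ring. Qed.

Definition vA (t x : R) := let E := expR (- 2%:R) in
  cv4 (4%:R - 2%:R * x) ((2%:R * x / E - 4%:R + 2%:R * x) / 2%:R) (x - 2%:R)
      (- ((4%:R - 2%:R * x) + t * ((2%:R * x / E - 4%:R + 2%:R * x) / 2%:R + x - 2%:R)) / (t * t)).
Definition vB (t x : R) := let E := expR (- 2%:R) in
  cv4 (4%:R - 2%:R * x) (x - 2%:R) ((2%:R * x / E - 4%:R + 2%:R * x) / 2%:R)
      (- ((4%:R - 2%:R * x) + t * ((2%:R * x / E - 4%:R + 2%:R * x) / 2%:R + x - 2%:R)) / (t * t)).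

Lemma solA (rho t x : R) : t != 0 -> infoM rho (xi_t t) *m vA t x = fvec (x, 0).
Proof.
move=> t0.
have E0 : expR (- 2%:R) != 0 :> R by rewrite gt_eqF // expR_gt0.
rewrite infoM_mul /xi_t !big_cons big_nil addr0 /= !fvecE /vA /= !dot4 lam00 lam20 lam02.
rewrite !cv4Z !cv4D; congr cv4; field; rewrite ?E0 ?t0 ?pnatr_eq0 //.
Qed.

Lemma solB (rho t x : R) : t != 0 -> infoM rho (xi_t t) *m vB t x = fvec (0, x).
Proof.
move=> t0.
have E0 : expR (- 2%:R) != 0 :> R by rewrite gt_eqF // expR_gt0.
rewrite infoM_mul /xi_t !big_cons big_nil addr0 /= !fvecE /vB /= !dot4 lam00 lam20 lam02.
rewrite !cv4Z !cv4D; congr cv4; field; rewrite ?E0 ?t0 ?pnatr_eq0 //.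
Qed.
End S.

Theorem lemma3 (R : realType) (rho : R) (hrho : 0 <= rho) :
  forall x : R, 0 <= x ->
    sens rho (xi_t (t_of rho)) (x, 0) = sens rho (xi_t (t_of rho)) (0, x) /\
    sens rho (xi_t (t_of rho)) (x, 0) <= 0.
Proof.
move=> x x0.
have t0 : t_of rho != 0.
  rewrite /t_of; case: ifP => [rp|_]; last by rewrite pnatr_eq0.
  have s1 : Num.sqrt (1 + 8%:R * rho) != 1.
    apply/eqP => h.
    have := @sqr_sqrtr R (1 + 8%:R * rho) ltac:(lra).
    rewrite h expr1n. lra.
  rewrite mulf_neq0 // ?subr_eq0 // invr_neq0 // mulf_neq0 // ?pnatr_eq0 //.
  by rewrite gt_eqF.
have U := @unit_M R rho (t_of rho) t0.
rewrite (@sens_sol R _ _ _ _ U (@solA R rho _ x t0)) (@sens_sol R _ _ _ _ U (@solB R rho _ x t0)).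
rewrite !fvecE /vA /vB /= !dot4 !lamE.
have -> : - x - 0 - rho * x * 0 = - x by ring.
have -> : - 0 - x - rho * 0 * x = - x by ring.
split; first by congr (_ / _ - _); ring.
have K := @key R x x0.
have E2 : expR (- 2%:R) = (expR 2%:R)^-1 :> R by rewrite expRN.
have Ex : (expR (- x))^-1 = expR x :> R by rewrite expRN invrK.
rewrite Ex E2 invrK.
set q := expR 2%:R in K *.
move: K; rewrite !exprS expr0 !mulr1 => K.
have -> : (1 * (4%:R - 2%:R * x) + x * ((2%:R * x * q - 4%:R + 2%:R * x) / 2%:R) + 0 * (x - 2%:R) +
   x * 0 * (- (4%:R - 2%:R * x + t_of rho * ((2%:R * x * q - 4%:R + 2%:R * x) / 2%:R + x - 2%:R)) /
    (t_of rho * t_of rho))) / 4%:R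
  = (1 - x / 2%:R) * (1 - x / 2%:R) + x / 2%:R * (x / 2%:R) * q by field.
lra.
Qed.
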